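(* Let $G\le \mathrm{Aut}(X^* )$ be a closed self-similar subgroup with Haar probability measure $\mu$. Then for every $n,m\ge 1$, every $a\in\pi_n(G)$, every $b\in\pi_m(G)$ and every $v\in\mathcal{L}_n$ such that $C_a\cap\mathcal{T}_v^{-1}(C_b)\neq\emptyset$, we have $$\mu\big(C_a\cap\mathcal{T}_v^{-1}(C_b)\big)\ \ge\ \mu(C_a)\cdot\mu(C_b).$$
   Context: $X$ is a finite alphabet and $X^*$ the rooted regular tree of finite words over $X$; $\mathrm{Aut}(X^* )$ is its automorphism group with the profinite topology. For $g\in\mathrm{Aut}(X^* )$ and $v\in X^*$, the section $g|_v\in\mathrm{Aut}(X^* )$ is defined by $g(vw)=g(v)\,g|_v(w)$ for all $w\in X^*$. $G$ is self-similar if $g|_v\in G$ for all $g\in G$, $v\in X^*$. $X^n$ is the truncated tree of height $n$, $\mathcal{L}_n\subset X^*$ the set of vertices at distance $n$ from the root, and $\pi_n:G\to\mathrm{Aut}(X^n)$ the restriction map; $\mathrm{St}_G(n)=\ker\pi_n$. For $a\in\pi_n(G)$, the cone set is $C_a=\pi_n^{-1}(a)\subseteq G$. For $v\in X^*$, $\mathcal{T}_v:G\to G$ is the map $\mathcal{T}_v(g)=g|_v$. *)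

(* Defs.v *)
From HB Require Import structures.
From mathcomp Require Import all_boot all_order all_algebra.
From mathcomp Require Import all_classical all_reals.
From mathcomp Require Import all_analysis.
Set Implicit Arguments. Unset Strict Implicit. Unset Printing Implicit Defensive.
Import Order.TTheory GRing.Theory Num.Theory.
Local Open Scope ring_scope.
Local Open Scope classical_set_scope.

Definition treemap (X : finType) := seq X -> seq X.
HB.instance Definition _ (X : finType) := gen_eqMixin (treemap X).
HB.instance Definition _ (X : finType) := gen_choiceMixin (treemap X).
HB.instance Definition _ (X : finType) :=
  isPointed.Build (treemap X) (fun w => w).

Section TreeAut.
Variable X : finType.
Local Notation treemap := (treemap X).


Definition is_tree_aut (g : treemap) : Prop :=
  bijective g /\ (forall w, size (g w) = size w) /\
  (forall v w, exists u, g (v ++ w) = g v ++ u).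

(* the section g|_v, defined by g(vw) = g(v) g|_v(w) *)
Definition section (g : treemap) (v : seq X) : treemap :=
  fun w => drop (size v) (g (v ++ w)).

(* g and h have the same image under pi_n (restriction to the truncated
   tree X^n of words of length <= n) *)
Definition agree (n : nat) (g h : treemap) : Prop :=
  forall w, (size w <= n)%N -> g w = h w.

Definition closed_subgroup (G : set treemap) : Prop :=
  [/\ (forall g, G g -> is_tree_aut g),
      G (fun w => w),
      (forall g h, G g -> G h -> G (g \o h)),
      (forall g, G g -> exists g', [/\ G g', g \o g' = (fun w => w)
                                           & g' \o g = (fun w => w)])
    & (* closed in the profinite topology of Aut(X^* ) *)
      (forall g, is_tree_aut g ->
         (forall n, exists h, G h /\ agree n g h) -> G g)].

Definition self_similar (G : set treemap) : Prop :=
  forall g v, G g -> G (section g v).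

(* the cone set C_a, for a = pi_n(h) in pi_n(G) (h in G) *)
Definition cone (G : set treemap) (n : nat) (h : treemap) : set treemap :=
  [set g | G g /\ agree n g h].

(* the family of all cone sets of G, generating the Borel sigma-algebra of G *)
Definition cones (G : set treemap) : set (set treemap) :=
  [set A | exists n h, G h /\ A = cone G n h].

Local Notation Gspace G := (g_sigma_algebraType (cones G)).

Definition Tv_preimage (G : set treemap) (v : seq X) (B : set treemap)
  : set treemap := [set g | G g /\ B (section g v)].

Definition is_haar_prob (R : realType) (G : set treemap)
  (mu : {measure set (Gspace G) -> \bar R}) : Prop :=
  [/\ mu [set: Gspace G] = 1%E, mu (G : set (Gspace G)) = 1%E
    & forall h, G h -> forall A : set (Gspace G), measurable A ->
        mu [set g : Gspace G | G g /\ A (h \o g)] = mu (A `&` G)].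

End TreeAut.
Notation Gspace G := (g_sigma_algebraType (cones G)).

(* Main.v *)
Require Import Defs.
From HB Require Import structures.
From mathcomp Require Import all_boot all_order all_algebra.
From mathcomp Require Import all_classical all_reals.
From mathcomp Require Import all_analysis.
From mathcomp Require Import lra.
Import Order.TTheory GRing.Theory Num.Theory.
Local Open Scope ring_scope.
Local Open Scope classical_set_scope.
Local Open Scope ereal_scope.
Set Implicit Arguments. Unset Strict Implicit.
Definition taut (X : finType) (g : treemap X) :=
  injective g /\ (forall w, size (g w) = size w) /\
  (forall v w, exists u, g (v ++ w) = g v ++ u).

Lemma taut_of X (g : treemap X) : is_tree_aut g -> taut g.
Proof. by move=> [/bij_inj ? [? ?]]. Qed.

Lemma sec_eq X (g : treemap X) v w : taut g -> g (v ++ w) = g v ++ section g v w.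
Proof.
move=> [_ [Hs Hp]]; have [u E] := Hp v w.
by rewrite /section E drop_size_cat.
Qed.

Lemma sec_size X (g : treemap X) v w : taut g -> size (section g v w) = size w.
Proof.
move=> Hg; have := congr1 size (sec_eq v w Hg).
rewrite size_cat (proj1 (proj2 Hg)) size_cat => E.
rewrite (proj1 (proj2 Hg) v) in E.
by apply: (@addnI (size v)); rewrite E.
Qed.

Lemma sec_inj X (g : treemap X) v : taut g -> injective (section g v).
Proof.
move=> Hg w1 w2 E; have E1 := sec_eq v w1 Hg; have E2 := sec_eq v w2 Hg.
rewrite E -E2 in E1; have := proj1 Hg _ _ E1.
by move/eqP; rewrite eqseq_cat // => /andP [_ /eqP].
Qed.

Lemma sec_comp X (g k : treemap X) v : taut k -> k v = v ->
  section (g \o k) v = section g v \o section k v.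
Proof.
move=> Hk Hv; apply: funext => w.
by rewrite /section /= (sec_eq v w Hk) Hv drop_size_cat.
Qed.

Lemma sec_id (X : finType) (v : seq X) : section (fun w => w) v = (fun w => w).
Proof. by apply: funext => w; rewrite /section drop_size_cat. Qed.

Lemma agree_comp X k (a b c : treemap X) : injective a -> agree k a c ->
  (agree k (a \o b) c <-> agree k b (fun w => w)).
Proof.
move=> Ia Hac; split => H w Hw.
  by apply: Ia; rewrite (Hac w Hw) -(H w Hw).
by rewrite /= (H w Hw) (Hac w Hw).
Qed.

Lemma agree_fix X n (k : treemap X) v : agree n k (fun w => w) -> size v = n -> k v = v.
Proof. by move=> H Hv; apply: H; rewrite Hv. Qed.

Definition idt (X : finType) : treemap X := fun w => w.
Definition Kset (X : finType) (G : set (treemap X)) n m (v : seq X) : set (treemap X) :=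
  [set k | G k /\ agree n k (fun w => w) /\ agree m (section k v) (fun w => w)].
Definition Pre (X : finType) (G : set (treemap X)) (h : treemap X) (A : set (treemap X)) :
  set (treemap X) := [set g | G g /\ A (h \o g)].

Lemma G_taut X (G : set (treemap X)) g : closed_subgroup G -> G g -> taut g.
Proof. by case=> H _ _ _ _ Hg; apply: taut_of; apply: H. Qed.

Lemma G_inv X (G : set (treemap X)) g : closed_subgroup G -> G g ->
  exists g', [/\ G g', g \o g' = (fun w => w) & g' \o g = (fun w => w)].
Proof. by case=> _ _ _ H _ Hg; apply: H. Qed.

Lemma G_comp X (G : set (treemap X)) g h : closed_subgroup G -> G g -> G h -> G (g \o h).
Proof. by case=> _ _ H _ _; apply: H. Qed.

Lemma G_id X (G : set (treemap X)) : closed_subgroup G -> G (fun w => w).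
Proof. by case. Qed.

Lemma app_eq X (f g : treemap X) w : f = g -> f w = g w.
Proof. by move=> ->. Qed.

Lemma agree_inv X n (k j : treemap X) : agree n k (fun w => w) ->
  (forall w, size (j w) = size w) -> k \o j = (fun w => w) -> agree n j (fun w => w).
Proof.
move=> Hk Hs E w Hw; rewrite -{2}(app_eq w E) /=.
by rewrite Hk ?Hs.
Qed.

Lemma K_comp X (G : set (treemap X)) n m v k1 k2 : closed_subgroup G -> size v = n ->
  Kset G n m v k1 -> Kset G n m v k2 -> Kset G n m v (k1 \o k2).
Proof.
move=> HG Hv [G1 [A1 B1]] [G2 [A2 B2]]; split; first exact: G_comp.
split; first by move=> w Hw; rewrite /= A2 // A1.
rewrite sec_comp; [|exact: (G_taut HG G2)|exact: agree_fix A2 Hv].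
by move=> w Hw; rewrite /= B2 // B1.
Qed.

Lemma K_inv X (G : set (treemap X)) n m v k j : closed_subgroup G -> size v = n ->
  Kset G n m v k -> G j -> k \o j = (fun w => w) -> Kset G n m v j.
Proof.
move=> HG Hv [Gk [A B]] Gj E.
have Tj := G_taut HG Gj.
have Aj : agree n j (fun w => w) by apply: agree_inv A (proj1 (proj2 Tj)) E.
split=> //; split=> //.
apply: agree_inv B (sec_size v ^~ Tj) _.
rewrite -sec_comp //; last exact: agree_fix Aj Hv.
by rewrite E sec_id.
Qed.

Lemma K_id X (G : set (treemap X)) n m v : closed_subgroup G -> Kset G n m v (fun w => w).
Proof. by move=> HG; split; [exact: G_id|split=> // w _; rewrite sec_id]. Qed.

Lemma Pre_cone X (G : set (treemap X)) k g0 h : closed_subgroup G -> G g0 ->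
  agree k g0 h -> Pre G g0 (cone G k h) = cone G k (fun w => w).
Proof.
move=> HG G0 A0; have I0 := proj1 (G_taut HG G0).
apply/seteqP; split=> g.
  by move=> [Gg [_ Ag]]; split=> //; apply/(agree_comp g I0 A0).
move=> [Gg Ag]; split=> //; split; first exact: G_comp.
exact/(agree_comp g I0 A0).
Qed.

Lemma Pre_S X (G : set (treemap X)) n m v ha hb g0 :
  closed_subgroup G -> self_similar G -> size v = n ->
  (cone G n ha `&` Tv_preimage G v (cone G m hb)) g0 ->
  Pre G g0 (cone G n ha `&` Tv_preimage G v (cone G m hb)) = Kset G n m v.
Proof.
move=> HG HS Hv [[G0 A0] [_ [_ B0]]].
have T0 := G_taut HG G0; have I0 := proj1 T0.
have Is := sec_inj (v:=v) T0.
apply/seteqP; split=> g.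
  move=> [Gg [[_ A] [_ [_ B]]]].
  have Ag : agree n g (fun w => w) by apply/(agree_comp g I0 A0).
  split=> //; split=> //.
  rewrite sec_comp in B; [|exact: (G_taut HG Gg)|exact: agree_fix Ag Hv].
  exact/(agree_comp _ Is B0).
move=> [Gg [Ag Bg]]; have G0g := G_comp HG G0 Gg.
split=> //; split; first by split=> //; apply/(agree_comp g I0 A0).
split=> //; split; first exact: HS.
rewrite sec_comp; [|exact: (G_taut HG Gg)|exact: agree_fix Ag Hv].
exact/(agree_comp _ Is B0).
Qed.

Lemma claimA X (G : set (treemap X)) n m v h g g' :
  closed_subgroup G -> size v = n -> G h -> G g -> G g' ->
  g' \o g = (fun w => w) ->
  Pre G h (Kset G n m v) g \/ Pre G g' (Kset G n m v) `&` Pre G h (Kset G n m v) = set0.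
Proof.
move=> HG Hv Gh Gg Gg' E.
case: (pselect (Pre G g' (Kset G n m v) `&` Pre G h (Kset G n m v) = set0)) => [->|NE]; first by right.
left; move/eqP/set0P: NE => [x [[Gx K1] [_ K2]]].
have [x' [Gx' Exx' _]] := G_inv HG Gx.
have Ej : (g' \o x) \o (x' \o g) = (fun w => w).
  apply: funext => w /=; move: (app_eq (g w) Exx') (app_eq w E) => /= -> //.
have Kj := K_inv HG Hv K1 (G_comp HG Gx' Gg) Ej.
have := K_comp HG Hv K2 Kj.
have -> : (h \o x) \o (x' \o g) = h \o g.
  by apply: funext => w /=; move: (app_eq (g w) Exx') => /= ->.
by move=> Kh; split.
Qed.

Lemma claimB X (G : set (treemap X)) n m v h1 h2 :
  closed_subgroup G -> self_similar G -> size v = n ->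
  cone G n (fun w => w) h1 -> cone G n (fun w => w) h2 ->
  Pre G h1 (Kset G n m v) `&` Pre G h2 (Kset G n m v) = set0 ->
  Pre G (section h1 v) (cone G m (fun w => w)) `&`
    Pre G (section h2 v) (cone G m (fun w => w)) = set0.
Proof.
move=> HG HS Hv [G1 A1] [G2 A2] E.
case: (pselect (Pre G (section h1 v) (cone G m (fun w => w)) `&`
    Pre G (section h2 v) (cone G m (fun w => w)) = set0)) => // NE.
exfalso; move/eqP/set0P: NE => [x [[Gx [_ B1]] [_ [_ B2]]]].
have [h1' [G1' E11' _]] := G_inv HG G1.
have T1' := G_taut HG G1'.
have A1' : agree n h1' (fun w => w) by apply: agree_inv A1 (proj1 (proj2 T1')) E11'.
have Hv1' : h1' v = v by exact: agree_fix A1' Hv.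
have [x' [Gx' Exx' _]] := G_inv HG Gx.
have Tx := G_taut HG Gx; have Tx' := G_taut HG Gx'.
have S1 : section h1 v \o section h1' v = (fun w => w).
  by rewrite -sec_comp // E11' sec_id.
have : (Pre G h1 (Kset G n m v) `&` Pre G h2 (Kset G n m v)) h1'.
  split; split=> //; first by rewrite E11'; exact: K_id.
  split; first exact: G_comp.
  split; first by move=> w Hw /=; rewrite A1' // A2.
  rewrite sec_comp //.
  move=> w Hw /=.
  set u := section h1' v w.
  have Hu : size u = size w by exact: sec_size.
  set z := x' u.
  have Hxz : x z = u by move: (app_eq u Exx').
  have Hz : size z = size w by rewrite /z (proj1 (proj2 Tx')).
  have : section h1 v (x z) = z by apply: (B1 z); rewrite Hz.
  rewrite Hxz; move: (app_eq w S1) => /= -> Ezw.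
  by rewrite -Hxz -Ezw; apply: (B2 w).
by rewrite E.
Qed.

Definition sat (X : finType) (G : set (treemap X)) N (S : set (treemap X)) :=
  S `<=` G /\ forall g g', S g -> G g' -> agree N g g' -> S g'.

Fixpoint wl (X : finType) (k : nat) : seq (seq X) :=
  match k with
  | 0 => [:: [::]]
  | k.+1 => [::] :: [seq x :: w | x <- enum X, w <- wl X k]
  end.

Lemma wl_mem (X : finType) k (w : seq X) : (size w <= k)%N -> w \in wl X k.
Proof.
elim: k w => [|k IH] [|x w] //= Hw.
rewrite inE; apply/orP; right; apply: allpairs_f; first by rewrite mem_enum.
exact: IH.
Qed.

Lemma agree_sym X N (g h : treemap X) : agree N g h -> agree N h g.
Proof. by move=> H w Hw; rewrite H. Qed.

Lemma agree_trans X N (g h k : treemap X) : agree N g h -> agree N h k -> agree N g k.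
Proof. by move=> H1 H2 w Hw; rewrite H1 // H2. Qed.

Lemma cone_meas X (G : set (treemap X)) N h : G h ->
  measurable (cone G N h : set (Gspace G)).
Proof. by move=> Gh; apply: sub_sigma_algebra; exists N, h. Qed.

Lemma sat_meas X (G : set (treemap X)) N S : sat G N S ->
  measurable (S : set (Gspace G)).
Proof.
move=> [SG Ssat].
pose dat (g : treemap X) := map g (wl X N).
have dat_agree g g' : dat g = dat g' -> agree N g g'.
  by move=> /eq_in_map H w Hw; apply: H; apply: wl_mem.
pose A (s : seq (seq X)) : set (Gspace G) :=
  [set g' | exists g, [/\ S g, dat g = s, G g' & agree N g' g]].
have -> : (S : set (Gspace G)) = \bigcup_s A s.
  apply/seteqP; split=> g.
    by move=> Sg; exists (dat g) => //; exists g; split=> //; apply: SG.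
  move=> [s _ [g0 [S0 _ Gg Ag]]].
  by apply: (Ssat g0) => //; apply: agree_sym.
apply: countable_bigcupT_measurable; first exact: countableP.
move=> s; case: (pselect (exists g, S g /\ dat g = s)) => [[g0 [S0 D0]]|NE].
  have -> : A s = cone G N g0.
    apply/seteqP; split=> g.
      move=> [g1 [S1 D1 Gg Ag]]; split=> //.
      apply: (agree_trans Ag); apply: dat_agree; by rewrite D1 D0.
    move=> [Gg Ag]; exists g0; split=> //.
  exact: cone_meas (SG _ S0).
have -> : A s = set0.
  apply/seteqP; split=> g // [g1 [S1 D1 _ _]]; exfalso; apply: NE; by exists g1.
exact: measurable0.
Qed.

Lemma agree_le X N k (g g' : treemap X) : agree N g g' -> (k <= N)%N -> agree k g g'.
Proof. by move=> H Hk w Hw; apply: H; apply: leq_trans Hk. Qed.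

Lemma agree_sec X n m v (g g' : treemap X) : size v = n -> agree (n + m) g g' ->
  agree m (section g v) (section g' v).
Proof.
move=> Hv H w Hw; rewrite /section H //.
by rewrite size_cat Hv leq_add2l.
Qed.

Lemma sat_cone X (G : set (treemap X)) N k h : (k <= N)%N -> sat G N (cone G k h).
Proof.
move=> Hk; split; first by move=> g [].
move=> g g' [Gg Ag] Gg' A; split=> //.
apply: agree_trans Ag; apply: agree_sym; exact: agree_le A Hk.
Qed.

Lemma sat_K X (G : set (treemap X)) n m v : size v = n -> sat G (n + m) (Kset G n m v).
Proof.
move=> Hv; split; first by move=> g [].
move=> g g' [Gg [Ag Bg]] Gg' A; split=> //; split.
  apply: agree_trans Ag; apply: agree_sym; exact: agree_le A (leq_addr _ _).
apply: agree_trans Bg; apply: agree_sym; exact: agree_sec Hv A.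
Qed.

Lemma sat_S X (G : set (treemap X)) n m v ha hb : self_similar G -> size v = n ->
  sat G (n + m) (cone G n ha `&` Tv_preimage G v (cone G m hb)).
Proof.
move=> HS Hv; split; first by move=> g [[]].
move=> g g' [[Gg Ag] [_ [_ Bg]]] Gg' A; split.
  split=> //; apply: agree_trans Ag; apply: agree_sym; exact: agree_le A (leq_addr _ _).
split=> //; split; first exact: HS.
apply: agree_trans Bg; apply: agree_sym; exact: agree_sec Hv A.
Qed.

Lemma sat_Pre X (G : set (treemap X)) N h A : closed_subgroup G -> G h ->
  sat G N A -> sat G N (Pre G h A).
Proof.
move=> HG Gh [AG Asat]; split; first by move=> g [].
move=> g g' [Gg Ag] Gg' E; split=> //.
apply: (Asat (h \o g)) => //; first exact: G_comp.
by move=> w Hw /=; rewrite E.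
Qed.

Lemma mu_Pre X (R : realType) (G : set (treemap X)) (mu : {measure set (Gspace G) -> \bar R})
  N h A : is_haar_prob mu -> G h -> sat G N A -> mu (Pre G h A) = mu A.
Proof.
move=> [_ _ H] Gh SA.
have := H h Gh A (sat_meas SA); rewrite /Pre => ->.
by rewrite setIidl //; case: SA.
Qed.

Lemma mu_real X (R : realType) (G : set (treemap X)) (mu : {measure set (Gspace G) -> \bar R})
  N A : is_haar_prob mu -> sat G N A -> exists x : R, mu A = x%:E /\ (0 <= x <= 1)%R.
Proof.
move=> [HT _ _] SA.
have le1 : mu A <= 1.
  rewrite -HT; apply: le_measure; rewrite ?inE //.
  exact: sat_meas SA.
have ge0 : 0 <= mu A by exact: measure_ge0.
move: le1 ge0; case: (mu A) => [x| |] //= le1 ge0.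
by exists x; split=> //; rewrite -!lee_fin le1 ge0.
Qed.

Lemma exists_max (P : nat -> Prop) (B : nat) : P 0%N -> ~ P B -> exists r, P r /\ ~ P r.+1.
Proof.
move=> P0; elim: B => [//|B IH] NB.
case: (pselect (P B)) => PB; first by exists B.
exact: IH.
Qed.

Lemma sum_constE (R : realType) r (c : R) : (\sum_(i < r) c%:E = (r%:R * c)%:E)%E.
Proof. by rewrite sumEFin sumr_const card_ord mulr_natl. Qed.

Lemma arith1 (R : realType) (p y b : R) : (0 < p)%R -> (p * y = 1)%R -> (y < b)%R ->
  (b * p <= 1)%R -> False.
Proof. move=> *; nra. Qed.

Lemma arith2 (R : realType) (t p q r : R) : (t <= r * q)%R -> (r * p <= 1)%R ->
  (0 < p)%R -> (0 <= q)%R -> (t * p <= q)%R.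
Proof. move=> *; nra. Qed.

Lemma key X (R : realType) (G : set (treemap X)) (mu : {measure set (Gspace G) -> \bar R})
  n m v : closed_subgroup G -> self_similar G -> is_haar_prob mu -> size v = n ->
  mu (cone G n (fun w => w)) * mu (cone G m (fun w => w)) <= mu (Kset G n m v).
Proof.
move=> HG HS Hmu Hv.
have satSn : sat G (n + m) (cone G n (fun w => w)) by apply: sat_cone; exact: leq_addr.
have satSm : sat G (n + m) (cone G m (fun w => w)) by apply: sat_cone; exact: leq_addl.
have satK : sat G (n + m) (Kset G n m v) by exact: sat_K.
have [t [Et /andP [t0 t1]]] := mu_real Hmu satSn.
have [p [Ep /andP [p0 p1]]] := mu_real Hmu satSm.
have [q [Eq /andP [q0 q1]]] := mu_real Hmu satK.
rewrite Et Ep Eq -EFinM lee_fin.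
have [->|pn0] := eqVneq p 0%R; first by rewrite mulr0.
have pgt0 : (0 < p)%R by rewrite lt_neqAle eq_sym pn0 p0.
pose K := Kset G n m v.
pose Good r := exists f : nat -> treemap X,
  (forall i, (i < r)%N -> cone G n (fun w => w) (f i)) /\
  (forall i j, (i < r)%N -> (j < r)%N -> i != j -> Pre G (f i) K `&` Pre G (f j) K = set0).
have bound : forall r, Good r -> (r%:R * p <= 1)%R.
  move=> r [f [Hf Hd]].
  pose F i := Pre G (section (f i) v) (cone G m (fun w => w)).
  have satF i : (i < r)%N -> sat G (n + m) (F i).
    by move=> Hi; apply: sat_Pre => //; apply: HS; case: (Hf i Hi).
  have mU : measurable (\big[setU/set0]_(k < r) F k : set (Gspace G)).
    by apply: bigsetU_measurable => i _; apply: sat_meas; apply: satF.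
  have Hle : mu (\big[setU/set0]_(k < r) F k : set (Gspace G)) <= 1.
    by case: Hmu => HT _ _; rewrite -HT; apply: le_measure; rewrite ?inE.
  rewrite measure_semi_additive_ord_I // in Hle; first last.
  - apply/trivIsetP => i j Hi Hj Hij; apply: (claimB HG HS Hv); [exact: (Hf i Hi)|exact: (Hf j Hj)|exact: (Hd i j Hi Hj Hij)].
  - by move=> k Hk; apply: sat_meas; apply: satF.
  rewrite (eq_bigr (fun _ => p%:E)) ?sum_constE ?lee_fin // in Hle.
  move=> i _; rewrite /F -Ep; apply: (mu_Pre (N := n + m)) => //.
  by apply: HS; case: (Hf i (ltn_ord i)).
have [r [Gr NGr]] : exists r, Good r /\ ~ Good r.+1.
  apply: (exists_max (B := Num.bound (p^-1)%R)).
    by exists (fun _ => (fun w => w)); split.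
  move/bound => Hb.
  have := archi_boundP (ltW (eq_ind_r is_true pgt0 (invr_gt0 p)) : (0 <= p^-1)%R).
  have pp : (p * p^-1 = 1)%R by rewrite mulfV.
  by move=> Hlt; apply: (arith1 pgt0 pp Hlt Hb).
case: Gr => f [Hf Hd].
have cover : cone G n (fun w => w) `<=` \big[setU/set0]_(k < r) Pre G (f k) K.
  move=> g [Gg Ag].
  have [g' [Gg' Egg' Eg'g]] := G_inv HG Gg.
  have Ag' : agree n g' (fun w => w).
    by apply: agree_inv Ag (proj1 (proj2 (G_taut HG Gg'))) Egg'.
  case: (pselect (exists i, (i < r)%N /\ Pre G (f i) K g)) => [[i [Hi Pi]]|NE].
    by rewrite -(bigcup_mkord r (fun k => Pre G (f k) K)); exists i.
  exfalso; apply: NGr.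
  have disj j : (j < r)%N -> Pre G g' K `&` Pre G (f j) K = set0.
    move=> Hj; have [Pj|//] := claimA m HG Hv (h := f j) (proj1 (Hf j Hj)) Gg Gg' Eg'g.
    by exfalso; apply: NE; exists j.
  exists (fun i => if i == r then g' else f i); split.
    move=> i Hi; case: eqP => Hir; first by split.
    by apply: Hf; rewrite ltn_neqAle -ltnS Hi andbT; apply/eqP.
  move=> i j Hi Hj Hij.
  have lt_of k : (k < r.+1)%N -> k != r -> (k < r)%N.
    by move=> Hk Hkr; rewrite ltn_neqAle Hkr -ltnS Hk.
  case: (eqVneq i r) => [Eir|Nir]; case: (eqVneq j r) => [Ejr|Njr].
  - by move: Hij; rewrite Eir Ejr eqxx.
  - by apply: disj; apply: lt_of.
  - by rewrite setIC; apply: disj; apply: lt_of.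
  - by apply: Hd => //; apply: lt_of.
have satP i : (i < r)%N -> sat G (n + m) (Pre G (f i) K).
  by move=> Hi; apply: sat_Pre => //; case: (Hf i Hi).
have mU : measurable (\big[setU/set0]_(k < r) Pre G (f k) K : set (Gspace G)).
  by apply: bigsetU_measurable => i _; apply: sat_meas; apply: satP.
have Hle : mu (cone G n (fun w => w)) <= mu (\big[setU/set0]_(k < r) Pre G (f k) K : set (Gspace G)).
  by apply: le_measure; rewrite ?inE //; apply: sat_meas satSn.
rewrite (measure_semi_additive_ord_I mu (F := fun k => Pre G (f k) K : set (Gspace G)) (n := r)) // in Hle; first last.
- by apply/trivIsetP => i j Hi Hj Hij; apply: Hd.
- by move=> k Hk; apply: sat_meas; apply: satP.
rewrite (eq_bigr (fun _ => q%:E)) ?sum_constE ?Et ?lee_fin in Hle; last first.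
  by move=> i _; rewrite -Eq; apply: (mu_Pre (N := n + m)) => //; case: (Hf i (ltn_ord i)).
have Hb := bound r (ex_intro _ f (conj Hf Hd)).
exact: (arith2 Hle Hb pgt0 q0).
Qed.

Theorem lemma1 (X : finType) (R : realType) (G : set (treemap X))
  (mu : {measure set (Gspace G) -> \bar R}) :
  closed_subgroup G -> self_similar G -> is_haar_prob mu ->
  forall (n m : nat), (1 <= n)%N -> (1 <= m)%N ->
  forall (ha hb : treemap X), G ha -> G hb ->
  forall v : seq X, size v = n ->
  cone G n ha `&` Tv_preimage G v (cone G m hb) !=set0 ->
  mu (cone G n ha) * mu (cone G m hb)
    <= mu (cone G n ha `&` Tv_preimage G v (cone G m hb)).
Proof.
move=> HG HS Hmu n m _ _ ha hb Ga Gb v Hv [g0 S0].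
have G0 : G g0 by case: S0 => [[]].
have A0 : agree n g0 ha by case: S0 => [[]].
have E1 : mu (cone G n ha) = mu (cone G n (fun w => w)).
  rewrite -(Pre_cone HG G0 A0); apply/esym; apply: (mu_Pre (N := n + m)) => //.
  by apply: sat_cone; exact: leq_addr.
have E2 : mu (cone G m hb) = mu (cone G m (fun w => w)).
  rewrite -(Pre_cone HG Gb (k := m) (h := hb) (fun w _ => erefl)).
  apply/esym; apply: (mu_Pre (N := n + m)) => //.
  by apply: sat_cone; exact: leq_addl.
have E3 : mu (cone G n ha `&` Tv_preimage G v (cone G m hb)) = mu (Kset G n m v).
  rewrite -(Pre_S HG HS Hv S0); apply/esym; apply: (mu_Pre (N := n + m)) => //.
  exact: sat_S.
rewrite E1 E2 E3; exact: key.
Qed.
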